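(* Assume Assumptions A, B, condition (P), and $c_1^2+c_2^2>0$. Then the maximal existence endpoint $R_{\max}$ of the solution $S$ of (IVP) equals $\infty$ (i.e. the solution exists on $[r_0,\infty)$) in each of the following cases: (1a) $c_2\le0<c_1$ and (C1); (1b) $c_1=0>c_2$ and (C4); (2a) $c_1\le0<c_2$ and (C3); (2b) $c_2=0>c_1$ and (C2); (3) $c_1,c_2>0$ and both (C1) and (C3); (4) $c_1,c_2<0$.
   Context: Fix an integer $n\ge2$. For $i=1,2$, $g_i(s)=a^{(i)}_0+a^{(i)}_1s^{\alpha^{(i)}_1}+\dots+a^{(i)}_{N_i}s^{\alpha^{(i)}_{N_i}}$ ($s\ge0$) with $N_i\ge0$, $a^{(i)}_0>0$, $a^{(i)}_j\ge0$, real $0<\alpha^{(i)}_1<\dots<\alpha^{(i)}_{N_i}$; $G_i(u)=g_i(|u|)u$ for $u\in\mathbb R$. Assumption A: $f_1,f_2\in C([0,1])\cap C^1((0,1))$, $f_1(0)=0$, $f_2(1)=0$, $f_1'>0$, $f_2'<0$ on $(0,1)$. Assumption B: $p_c'\in C^1((0,1))$, $p_c'>0$ on $(0,1)$. $F_i(S)=1/(p_c'(S)f_i(S))$. (IVP): $S'(r)=F(r,S(r))$ for $r>r_0$, $S(r_0)=s_0\in(0,1)$, $0<S(r)<1$, with $F(r,S)=G_2(c_2r^{1-n})F_2(S)-G_1(c_1r^{1-n})F_1(S)$; its unique solution on a maximal interval $[r_0,R_{\max})$ exists. Condition (P): $\lim_{S\to0^+}p_c'(S)f_1(S)=\lim_{S\to1^-}p_c'(S)f_2(S)=+\infty$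 (so $F_1(S)\to0$ as $S\to0^+$ and $F_2(S)\to0$ as $S\to1^-$). Conditions: (C1) $\limsup_{S\to0^+}F_1'(S)<\infty$; (C2) $\liminf_{S\to1^-}F_1'(S)>-\infty$; (C3) $\liminf_{S\to1^-}F_2'(S)>-\infty$; (C4) $\limsup_{S\to0^+}F_2'(S)<\infty$. *)

(* Defs.v *)
From Stdlib Require Import Reals Lra List Sorting.Sorted.
Import ListNotations.
Open Scope R_scope.

(* s^a for s >= 0 and a > 0, with the convention 0^a = 0. *)
Definition rpow (s a : R) : R := if Rle_dec s 0 then 0 else Rpower s a.

(* g(s) = a0 + sum_j a_j s^{alpha_j}; the list l contains the pairs (a_j, alpha_j). *)
Definition gfun (a0 : R) (l : list (R * R)) (s : R) : R :=
  a0 + fold_right (fun p acc => fst p * rpow s (snd p) + acc) 0 l.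

Definition g_admissible (a0 : R) (l : list (R * R)) : Prop :=
  0 < a0 /\ Forall (fun p => 0 <= fst p /\ 0 < snd p) l /\ Sorted Rlt (map snd l).

Definition Gfun (a0 : R) (l : list (R * R)) (u : R) : R := gfun a0 l (Rabs u) * u.

Definition Ffun (dpc f : R -> R) (S : R) : R := / (dpc S * f S).

Definition rhsF (n : nat) (a01 : R) (l1 : list (R * R)) (a02 : R) (l2 : list (R * R))
  (c1 c2 : R) (dpc f1 f2 : R -> R) (r S : R) : R :=
  Gfun a02 l2 (c2 * / r ^ (n - 1)) * Ffun dpc f2 S
  - Gfun a01 l1 (c1 * / r ^ (n - 1)) * Ffun dpc f1 S.

Definition C1_open (f df : R -> R) (a b : R) : Prop :=
  forall x, a < x < b -> derivable_pt_lim f x (df x) /\ continuity_pt df x.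

Definition cont_closed (f : R -> R) (a b : R) : Prop :=
  forall x, a <= x <= b -> forall eps, 0 < eps ->
    exists delta, 0 < delta /\
      forall y, a <= y <= b -> Rabs (y - x) < delta -> Rabs (f y - f x) < eps.

Definition limsup_deriv_0_finite (h : R -> R) : Prop :=
  exists M delta, 0 < delta /\
    forall S l, 0 < S < delta -> derivable_pt_lim h S l -> l <= M.

Definition liminf_deriv_1_finite (h : R -> R) : Prop :=
  exists M delta, 0 < delta /\
    forall S l, 1 - delta < S < 1 -> derivable_pt_lim h S l -> M <= l.

Definition global_solution (F : R -> R -> R) (r0 s0 : R) (S : R -> R) : Prop :=
  S r0 = s0 /\
  (forall r, r0 <= r -> 0 < S r < 1) /\
  (forall eps, 0 < eps -> exists delta, 0 < delta /\
      forall r, r0 <= r < r0 + delta -> Rabs (S r - s0) < eps) /\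
  (forall r, r0 < r -> derivable_pt_lim S r (F r (S r))).

(* Main.v *)
Require Import Defs.
From Stdlib Require Import Reals List Lra Lia Classical Sorting.Sorted.
From Coquelicot Require Import Coquelicot.
Open Scope R_scope.

Lemma cont_eps (f:R->R) x : continuous f x <->
  (forall eps, 0<eps -> exists d, 0<d /\ forall y, Rabs (y-x) < d -> Rabs (f y - f x) < eps).
Proof.
  unfold continuous; rewrite <- continuity_pt_filterlim.
  unfold continuity_pt, continue_in, limit1_in, limit_in, D_x, no_cond; simpl; unfold R_dist.
  split.
  - intros H eps He. destruct (H eps He) as [d [Hd H']]. exists d; split; auto.
    intros y Hy. destruct (Req_dec y x) as [->|Hne].
    + rewrite Rminus_eq_0, Rabs_R0; auto.
    + apply H'; split; auto.
  - intros H eps He. destruct (H eps He) as [d [Hd H']]. exists d; split; auto.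
    intros y [_ Hy]. apply H'; auto.
Qed.

Lemma comp_cont (Ft : R -> R -> R) (x : R -> R) t
 (Hc : forall x t, continuous (fun t => Ft t x) t)
 (HL : exists L, 0 <= L /\ forall u y z, Rabs (u - t) < 1 -> Rabs (Ft u y - Ft u z) <= L * Rabs (y - z))
 (Hx : continuous x t) : continuous (fun u => Ft u (x u)) t.
Proof.
  destruct HL as [L [HL0 HL]].
  apply cont_eps. intros eps He.
  destruct (proj1 (cont_eps _ _) (Hc (x t) t) (eps/2)) as [d1 [Hd1 H1]]; [lra|].
  destruct (proj1 (cont_eps _ _) Hx (eps/(2*(L+1)))) as [d2 [Hd2 H2]].
  { apply Rdiv_lt_0_compat; lra. }
  exists (Rmin 1 (Rmin d1 d2)). split.
  { repeat apply Rmin_glb_lt; lra. }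
  intros y Hy.
  assert (Hy1 : Rabs (y - t) < 1) by (eapply Rlt_le_trans; [exact Hy|apply Rmin_l]).
  assert (Hyd1 : Rabs (y - t) < d1) by (eapply Rlt_le_trans; [exact Hy|eapply Rle_trans; [apply Rmin_r|apply Rmin_l]]).
  assert (Hyd2 : Rabs (y - t) < d2) by (eapply Rlt_le_trans; [exact Hy|eapply Rle_trans; [apply Rmin_r|apply Rmin_r]]).
  specialize (H1 y Hyd1). specialize (H2 y Hyd2). specialize (HL y (x y) (x t) Hy1).
  replace (Ft y (x y) - Ft t (x t)) with ((Ft y (x y) - Ft y (x t)) + (Ft y (x t) - Ft t (x t))) by ring.
  eapply Rle_lt_trans; [apply Rabs_triang|].
  assert (L * Rabs (x y - x t) <= L * (eps / (2*(L+1)))) by (apply Rmult_le_compat_l; lra).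
  assert (L * (eps / (2*(L+1))) <= eps/2).
  { unfold Rdiv. rewrite Rinv_mult. 
    assert (0 < /(L+1)) by (apply Rinv_0_lt_compat; lra).
    assert (L * /(L+1) <= 1). { apply (Rmult_le_reg_r (L+1)); [lra|]. rewrite Rmult_assoc, Rinv_l; lra. }
    replace (L * (eps * (/2 * /(L+1)))) with ((L * /(L+1)) * (eps/2)) by (unfold Rdiv; ring).
    assert (0 <= eps/2) by lra. nra. }
  lra.
Qed.

Lemma Rmax_lip a b c : Rabs (Rmax a c - Rmax b c) <= Rabs (a - b).
Proof. unfold Rabs, Rmax; repeat destruct Rcase_abs; repeat destruct Rle_dec; lra. Qed.

Lemma cont_Rmax c x : continuous (fun r => Rmax r c) x.
Proof.
  apply cont_eps. intros eps He. exists eps; split; auto. intros y Hy.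
  eapply Rle_lt_trans; [apply Rmax_lip|auto].
Qed.

Fixpoint iter (Ft : R -> R -> R) (r0 s0 : R) (k : nat) : R -> R :=
  match k with
  | O => fun _ => s0
  | S k' => fun r => s0 + RInt (fun t => Ft t (iter Ft r0 s0 k' t)) r0 (Rmax r r0)
  end.

Lemma RInt_cont_fun (g : R -> R) a (Hg : forall t, continuous g t) :
  forall x, continuous (fun u => RInt g a u) x.
Proof.
  intros x. apply (ex_derive_continuous (K:=R_AbsRing) (V:=R_NormedModule)). exists (g x).
  apply (is_derive_RInt (V:=R_NormedModule) g (fun u => RInt g a u) a x).
  - apply filter_forall. intros b. 
    exact (RInt_correct (V:=R_CompleteNormedModule) g a b (ex_RInt_continuous (V:=R_CompleteNormedModule) g a b (fun z _ => Hg z))).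
  - apply Hg.
Qed.

Definition LocLip (Ft : R -> R -> R) :=
  forall T, exists L, 0 < L /\ forall t x y, t <= T -> Rabs (Ft t x - Ft t y) <= L * Rabs (x - y).

Lemma LocLip_loc Ft t : LocLip Ft ->
  exists L, 0 <= L /\ forall u y z, Rabs (u - t) < 1 -> Rabs (Ft u y - Ft u z) <= L * Rabs (y - z).
Proof.
  intros H. destruct (H (t+1)) as [L [HL H']]. exists L; split; [lra|].
  intros u y z Hu. apply H'. apply Rabs_def2 in Hu. lra.
Qed.

Lemma iter_cont Ft r0 s0 (Hc : forall x t, continuous (fun t => Ft t x) t) (HL : LocLip Ft) :
  forall k x, continuous (iter Ft r0 s0 k) x.
Proof.
  induction k; intros x; simpl.
  - apply continuous_const.
  - apply (continuous_plus (fun _ => s0) (fun r => RInt (fun t => Ft t (iter Ft r0 s0 k t)) r0 (Rmax r r0))).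
    + apply continuous_const.
    + apply (continuous_comp (fun r => Rmax r r0) (fun u => RInt (fun t => Ft t (iter Ft r0 s0 k t)) r0 u)).
      * apply cont_Rmax.
      * apply RInt_cont_fun. intros t. apply comp_cont; auto. apply LocLip_loc; auto.
Qed.

Lemma iter_left Ft r0 s0 : forall k r, r <= r0 -> iter Ft r0 s0 k r = s0.
Proof.
  intros [|k] r Hr; simpl; auto.
  rewrite Rmax_right by lra. rewrite RInt_point. unfold zero; simpl. ring.
Qed.

Lemma exRI (g : R -> R) a b : (forall t, continuous g t) -> ex_RInt g a b.
Proof. intros H. exact (ex_RInt_continuous (V:=R_CompleteNormedModule) g a b (fun z _ => H z)). Qed.

Lemma RInt_abs_bound g h a b : a <= b -> (forall t, continuous g t) -> ex_RInt h a b ->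
  (forall t, a <= t <= b -> Rabs (g t) <= h t) -> Rabs (RInt g a b) <= RInt h a b.
Proof.
  intros Hab Hg Hh Hb. eapply Rle_trans.
  - apply abs_RInt_le; auto. apply exRI; auto.
  - apply RInt_le; auto.
    + apply exRI. intros t. apply continuous_Rabs_comp. auto.
    + intros x Hx. apply Hb; lra.
Qed.

Lemma RInt_exp_val C L r0 r : 0 < L ->
  is_RInt (fun t => C * exp (2*L*(t-r0))) r0 r (C * (exp (2*L*(r-r0)) - 1) / (2*L)).
Proof.
  intros HL.
  replace (C * (exp (2*L*(r-r0)) - 1) / (2*L)) with
    (minus (C * exp (2*L*(r-r0)) / (2*L)) (C * exp (2*L*(r0-r0)) / (2*L))).
  2:{ unfold minus, plus, opp; simpl. replace (r0 - r0) with 0 by ring. replace (2*L*0) with 0 by ring. rewrite exp_0. field. lra. }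
  apply (is_RInt_derive (V:=R_CompleteNormedModule) (fun t => C * exp (2*L*(t-r0)) / (2*L))).
  - intros x _. auto_derive; auto. replace (x + - r0) with (x - r0) by ring. field. lra.
  - intros x _. apply (ex_derive_continuous (K:=R_AbsRing) (V:=R_NormedModule)). auto_derive; auto.
Qed.

Lemma RInt_const_val M a b : RInt (fun _ => M) a b = M * (b - a).
Proof. rewrite RInt_const. unfold scal; simpl. unfold mult; simpl. ring. Qed.

Lemma g_cont Ft r0 s0 (Hc : forall x t, continuous (fun t => Ft t x) t) (HL : LocLip Ft) k :
  forall t, continuous (fun t => Ft t (iter Ft r0 s0 k t)) t.
Proof. intros t. apply comp_cont; auto. apply LocLip_loc; auto. apply iter_cont; auto. Qed.

Lemma iter_diff Ft r0 s0 (Hc : forall x t, continuous (fun t => Ft t x) t) (HLL : LocLip Ft)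
  L M T (HL0 : 0 < L)
  (HL : forall t x y, t <= T -> Rabs (Ft t x - Ft t y) <= L * Rabs (x - y))
  (HM : forall t, r0 <= t <= T -> Rabs (Ft t s0) <= M) :
  forall k r, r0 <= r <= T ->
    Rabs (iter Ft r0 s0 (S k) r - iter Ft r0 s0 k r) <= M*(T-r0) * (/2)^k * exp(2*L*(r-r0)).
Proof.
  induction k; intros r Hr.
  - simpl. rewrite Rmax_left by lra.
    assert (E: forall a b : R, a + b - a = b) by (intros; ring). rewrite E.
    eapply Rle_trans.
    + apply (RInt_abs_bound _ (fun _ => M)); [lra| |apply ex_RInt_const|].
      * intros t. apply (g_cont Ft r0 s0 Hc HLL 0).
      * intros t Ht. apply HM; lra.
    + rewrite RInt_const_val.
      assert (0 <= M) by (specialize (HM r0); assert (Rabs (Ft r0 s0) <= M) by (apply HM; lra); pose proof (Rabs_pos (Ft r0 s0)); lra).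
      assert (1 <= exp (2*L*(r-r0))).
      { rewrite <- exp_0. destruct (Req_dec r r0) as [->|]. replace (2*L*(r0-r0)) with 0 by ring; lra.
        left; apply exp_increasing. apply Rmult_lt_0_compat; lra. }
      simpl. assert (M*(r-r0) <= M*(T-r0)) by (apply Rmult_le_compat_l; lra).
      assert (0 <= M*(T-r0)) by (apply Rmult_le_pos; lra). nra.
  - change (iter Ft r0 s0 (S (S k)) r) with (s0 + RInt (fun t => Ft t (iter Ft r0 s0 (S k) t)) r0 (Rmax r r0)).
    change (iter Ft r0 s0 (S k) r) with (s0 + RInt (fun t => Ft t (iter Ft r0 s0 k t)) r0 (Rmax r r0)).
    rewrite Rmax_left by lra.
    set (K := M*(T-r0)).
    replace (s0 + RInt (fun t => Ft t (iter Ft r0 s0 (S k) t)) r0 r - (s0 + RInt (fun t => Ft t (iter Ft r0 s0 k t)) r0 r))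
      with (RInt (fun t => Ft t (iter Ft r0 s0 (S k) t) - Ft t (iter Ft r0 s0 k t)) r0 r).
    2:{ assert (E : RInt (fun t => Ft t (iter Ft r0 s0 (S k) t) - Ft t (iter Ft r0 s0 k t)) r0 r =
          RInt (fun t => Ft t (iter Ft r0 s0 (S k) t)) r0 r - RInt (fun t => Ft t (iter Ft r0 s0 k t)) r0 r).
        { exact (RInt_minus (V:=R_CompleteNormedModule) (fun t => Ft t (iter Ft r0 s0 (S k) t)) (fun t => Ft t (iter Ft r0 s0 k t)) r0 r
            (exRI _ _ _ (g_cont _ _ _ Hc HLL (S k))) (exRI _ _ _ (g_cont _ _ _ Hc HLL k))). }
        rewrite E. assert (E2: forall a b c : R, a - b = c + a - (c + b)) by (intros; ring). apply E2. }
    eapply Rle_trans.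
    + apply (RInt_abs_bound _ (fun t => (L*(K*(/2)^k)) * exp (2*L*(t-r0)))); [lra| | |].
      * intros t. apply (continuous_minus (V:=R_NormedModule)); apply g_cont; auto.
      * eexists. apply RInt_exp_val; auto.
      * intros t Ht. eapply Rle_trans. apply HL. lra.
        rewrite Rmult_assoc. apply Rmult_le_compat_l; [lra|]. apply IHk; lra.
    + rewrite (is_RInt_unique _ _ _ _ (RInt_exp_val _ _ r0 r HL0)).
      assert (0 <= K) by (unfold K; specialize (HM r0); assert (Rabs (Ft r0 s0) <= M) by (apply HM; lra); pose proof (Rabs_pos (Ft r0 s0)); apply Rmult_le_pos; lra).
      assert (0 <= (/2)^k) by (apply pow_le; lra).
      assert (0 < exp (2*L*(r-r0))) by apply exp_pos.
      simpl. unfold Rdiv. field_simplify; [|lra].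
      assert (0 <= K * (/2)^k) by (apply Rmult_le_pos; lra).
      nra.
Qed.

Lemma pow_half_mono k j : (/2)^(k+j) <= (/2)^k.
Proof.
  induction j. rewrite Nat.add_0_r; lra.
  rewrite Nat.add_succ_r. simpl. assert (0 <= (/2)^(k+j)) by (apply pow_le; lra). lra.
Qed.

Lemma iter_cauchy Ft r0 s0 (Hc : forall x t, continuous (fun t => Ft t x) t) (HLL : LocLip Ft)
  L M T (HL0 : 0 < L) (HT : r0 <= T)
  (HL : forall t x y, t <= T -> Rabs (Ft t x - Ft t y) <= L * Rabs (x - y))
  (HM : forall t, r0 <= t <= T -> Rabs (Ft t s0) <= M) :
  forall k j r, r <= T ->
    Rabs (iter Ft r0 s0 (k+j) r - iter Ft r0 s0 k r) <= 2 * (M*(T-r0)*exp(2*L*(T-r0))) * ((/2)^k - (/2)^(k+j)).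
Proof.
  assert (HM0 : 0 <= M) by (assert (Rabs (Ft r0 s0) <= M) by (apply HM; lra); pose proof (Rabs_pos (Ft r0 s0)); lra).
  assert (HK : 0 <= M*(T-r0)*exp(2*L*(T-r0))) by (apply Rmult_le_pos; [apply Rmult_le_pos; lra|left; apply exp_pos]).
  intros k j r Hr.
  pose proof (pow_half_mono k j).
  destruct (Rle_dec r r0) as [Hr0|Hr0].
  { rewrite !iter_left by lra. rewrite Rminus_eq_0, Rabs_R0. nra. }
  induction j.
  - rewrite Nat.add_0_r, Rminus_eq_0, Rabs_R0. lra.
  - rewrite Nat.add_succ_r.
    pose proof (pow_half_mono k j).
    replace (iter Ft r0 s0 (S (k + j)) r - iter Ft r0 s0 k r) with
      ((iter Ft r0 s0 (S (k + j)) r - iter Ft r0 s0 (k+j) r) + (iter Ft r0 s0 (k + j) r - iter Ft r0 s0 k r)) by ring.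
    eapply Rle_trans; [apply Rabs_triang|].
    pose proof (iter_diff Ft r0 s0 Hc HLL L M T HL0 HL HM (k+j) r ltac:(lra)).
    assert (exp (2*L*(r-r0)) <= exp (2*L*(T-r0))).
    { destruct (Req_dec r T) as [->|]; [lra|]. left; apply exp_increasing. nra. }
    assert (0 <= M*(T-r0)*(/2)^(k+j)) by (apply Rmult_le_pos; [apply Rmult_le_pos; lra|apply pow_le; lra]).
    assert (M*(T-r0)*(/2)^(k+j)*exp(2*L*(r-r0)) <= M*(T-r0)*(/2)^(k+j)*exp(2*L*(T-r0))) by (apply Rmult_le_compat_l; auto).
    replace ((/2)^(S (k+j))) with ((/2)^(k+j) * /2) by (simpl; ring).
    set (p := (/2)^(k+j)) in *. set (q := (/2)^k) in *. set (E1 := exp (2*L*(r-r0))) in *.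
    set (E2 := exp (2*L*(T-r0))) in *.
    assert (M * (T - r0) * p * E2 = M * (T - r0) * E2 * p) by ring.
    lra.
Qed.

Lemma cont_to_pt f x : continuous f x -> continuity_pt f x.
Proof. intros H. apply continuity_pt_filterlim. exact H. Qed.

Lemma consts Ft r0 s0 (Hc : forall x t, continuous (fun t => Ft t x) t) (HLL : LocLip Ft) T :
  r0 <= T -> exists C L, 0 <= C /\ 0 < L /\
    (forall t x y, t <= T -> Rabs (Ft t x - Ft t y) <= L * Rabs (x - y)) /\
    forall k j r, r <= T -> Rabs (iter Ft r0 s0 (k+j) r - iter Ft r0 s0 k r) <= C * ((/2)^k - (/2)^(k+j)).
Proof.
  intros HT. destruct (HLL T) as [L [HL0 HL]].
  destruct (continuity_ab_maj (fun t => Rabs (Ft t s0)) r0 T HT) as [m [Hm _]].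
  { intros c _. apply cont_to_pt. apply continuous_Rabs_comp. apply Hc. }
  exists (2 * (Rabs (Ft m s0)*(T-r0)*exp(2*L*(T-r0)))), L.
  assert (0 <= Rabs (Ft m s0)*(T-r0)*exp(2*L*(T-r0))) by (apply Rmult_le_pos; [apply Rmult_le_pos; [apply Rabs_pos|lra]|left; apply exp_pos]).
  split; [lra|]. split; auto. split; auto.
  apply iter_cauchy; auto.
Qed.

Definition Sol Ft r0 s0 (r : R) : R := real (Lim_seq (fun k => iter Ft r0 s0 k r)).

Lemma lim_le (u : nat -> R) (l : R) k c : is_lim_seq u l -> (forall j, u (j + k)%nat <= c) -> l <= c.
Proof.
  intros H Hb. apply (is_lim_seq_incr_n _ k) in H.
  pose proof (is_lim_seq_le _ _ _ _ Hb H (is_lim_seq_const c)) as H0. simpl in H0. auto.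
Qed.

Lemma Sol_bound Ft r0 s0 (Hc : forall x t, continuous (fun t => Ft t x) t) (HLL : LocLip Ft) T :
  r0 <= T -> exists C L, 0 <= C /\ 0 < L /\
    (forall t x y, t <= T -> Rabs (Ft t x - Ft t y) <= L * Rabs (x - y)) /\
    (forall r, r <= T -> is_lim_seq (fun k => iter Ft r0 s0 k r) (Sol Ft r0 s0 r)) /\
    forall k r, r <= T -> Rabs (Sol Ft r0 s0 r - iter Ft r0 s0 k r) <= C * (/2)^k.
Proof.
  intros HT. destruct (consts Ft r0 s0 Hc HLL T HT) as [C [L [HC [HL0 [HL Hb]]]]].
  assert (Hconv : forall r, r <= T -> is_lim_seq (fun k => iter Ft r0 s0 k r) (Sol Ft r0 s0 r)).
  { intros r Hr.
    assert (Hex : ex_finite_lim_seq (fun k => iter Ft r0 s0 k r)).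
    { apply ex_lim_seq_cauchy_corr. intros eps.
      destruct (pow_lt_1_zero (/2) ltac:(rewrite Rabs_pos_eq; lra) (eps / (C+1))) as [N HN].
      { apply Rdiv_lt_0_compat; [apply cond_pos|lra]. }
      exists N. intros n m Hn Hm.
      assert (Hgen : forall a b, (N <= a)%nat -> (a <= b)%nat -> Rabs (iter Ft r0 s0 b r - iter Ft r0 s0 a r) < eps).
      { intros a b Ha Hab. replace b with (a + (b - a))%nat by lia.
        eapply Rle_lt_trans; [apply Hb; auto|].
        specialize (HN a Ha). rewrite Rabs_pos_eq in HN by (apply pow_le; lra).
        assert (0 <= (/2)^(a + (b-a))) by (apply pow_le; lra).
        assert (C * (/2)^a <= C * (eps/(C+1))) by (apply Rmult_le_compat_l; lra).
        assert (C * (eps/(C+1)) < eps).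
        { unfold Rdiv. pose proof (cond_pos eps). apply (Rmult_lt_reg_r (C+1)); [lra|].
          rewrite Rmult_assoc, Rmult_assoc, Rinv_l by lra. nra. }
        nra. }
      destruct (Nat.le_ge_cases n m).
      - rewrite <- Rabs_Ropp. replace (- (iter Ft r0 s0 n r - iter Ft r0 s0 m r)) with (iter Ft r0 s0 m r - iter Ft r0 s0 n r) by ring. apply Hgen; lia.
      - apply Hgen; lia. }
    destruct Hex as [l Hl]. unfold Sol. rewrite (is_lim_seq_unique _ _ Hl). exact Hl. }
  exists C, L. repeat split; auto.
  intros k r Hr. apply Rabs_le. split.
  - assert (- (Sol Ft r0 s0 r) <= C * (/2)^k - iter Ft r0 s0 k r).
    { apply (lim_le (fun m => - iter Ft r0 s0 m r) _ k).
      - apply (is_lim_seq_opp _ (Sol Ft r0 s0 r)). auto.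
      - intros j. specialize (Hb k j r Hr). rewrite Nat.add_comm. apply Rabs_le_between in Hb.
        assert (0 <= (/2)^(k+j)) by (apply pow_le; lra). nra. }
    lra.
  - assert (Sol Ft r0 s0 r <= C * (/2)^k + iter Ft r0 s0 k r).
    { apply (lim_le (fun m => iter Ft r0 s0 m r) _ k).
      - auto.
      - intros j. specialize (Hb k j r Hr). rewrite Nat.add_comm. apply Rabs_le_between in Hb.
        assert (0 <= (/2)^(k+j)) by (apply pow_le; lra). nra. }
    lra.
Qed.

Lemma half_pow_small C eps : 0 < eps -> 0 <= C -> exists k, C*(/2)^k < eps.
Proof.
  intros He HC.
  destruct (pow_lt_1_zero (/2) ltac:(rewrite Rabs_pos_eq; lra) (eps / (C+1))) as [N HN].
  { apply Rdiv_lt_0_compat; lra. }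
  exists N. specialize (HN N (le_n N)). rewrite Rabs_pos_eq in HN by (apply pow_le; lra).
  assert (C * (/2)^N <= C * (eps/(C+1))) by (apply Rmult_le_compat_l; lra).
  assert (C * (eps/(C+1)) < eps).
  { unfold Rdiv. apply (Rmult_lt_reg_r (C+1)); [lra|].
    rewrite Rmult_assoc, Rmult_assoc, Rinv_l by lra. nra. }
  lra.
Qed.

Lemma zero_of_bound z D : (forall k, Rabs z <= D * (/2)^k) -> z = 0.
Proof.
  intros H. destruct (Req_dec z 0) as [|Hz]; auto. exfalso.
  assert (HD : 0 <= D) by (specialize (H O); simpl in H; pose proof (Rabs_pos z); lra).
  destruct (half_pow_small D (Rabs z)) as [k Hk]; auto. apply Rabs_pos_lt; auto.
  specialize (H k). lra.
Qed.

Lemma Sol_left Ft r0 s0 r : r <= r0 -> Sol Ft r0 s0 r = s0.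
Proof.
  intros Hr. unfold Sol.
  rewrite (Lim_seq_ext _ (fun _ => s0)). rewrite Lim_seq_const. reflexivity.
  intros k. apply iter_left; auto.
Qed.

Lemma Sol_cont Ft r0 s0 (Hc : forall x t, continuous (fun t => Ft t x) t) (HLL : LocLip Ft) :
  forall x, continuous (Sol Ft r0 s0) x.
Proof.
  intros x. apply cont_eps. intros eps He.
  destruct (Sol_bound Ft r0 s0 Hc HLL (Rmax x r0 + 1)) as [C [L [HC [_ [_ [_ Hb]]]]]].
  { pose proof (Rmax_r x r0). lra. }
  destruct (half_pow_small C (eps/3)) as [k Hk]; auto; try lra.
  destruct (proj1 (cont_eps _ _) (iter_cont Ft r0 s0 Hc HLL k x) (eps/3)) as [d [Hd Hd']]; [lra|].
  exists (Rmin 1 d). split; [apply Rmin_glb_lt; lra|].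
  intros y Hy.
  assert (Hy1 : Rabs (y - x) < 1) by (eapply Rlt_le_trans; [exact Hy|apply Rmin_l]).
  assert (Hyd : Rabs (y - x) < d) by (eapply Rlt_le_trans; [exact Hy|apply Rmin_r]).
  pose proof (Rmax_l x r0). apply Rabs_def2 in Hy1.
  pose proof (Hb k y ltac:(lra)). pose proof (Hb k x ltac:(lra)). specialize (Hd' y Hyd).
  replace (Sol Ft r0 s0 y - Sol Ft r0 s0 x) with
    ((Sol Ft r0 s0 y - iter Ft r0 s0 k y) + (iter Ft r0 s0 k y - iter Ft r0 s0 k x) - (Sol Ft r0 s0 x - iter Ft r0 s0 k x)) by ring.
  eapply Rle_lt_trans; [apply Rabs_triang|]. rewrite Rabs_Ropp.
  eapply Rle_lt_trans; [apply Rplus_le_compat_r; apply Rabs_triang|]. lra.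
Qed.

Lemma gS_cont Ft r0 s0 (Hc : forall x t, continuous (fun t => Ft t x) t) (HLL : LocLip Ft) :
  forall t, continuous (fun t => Ft t (Sol Ft r0 s0 t)) t.
Proof. intros t. apply comp_cont; auto. apply LocLip_loc; auto. apply Sol_cont; auto. Qed.

Lemma Sol_eq Ft r0 s0 (Hc : forall x t, continuous (fun t => Ft t x) t) (HLL : LocLip Ft) :
  forall r, r0 <= r -> Sol Ft r0 s0 r = s0 + RInt (fun t => Ft t (Sol Ft r0 s0 t)) r0 r.
Proof.
  intros r Hr.
  destruct (Sol_bound Ft r0 s0 Hc HLL r Hr) as [C [L [HC [HL0 [HL [_ Hb]]]]]].
  assert (Sol Ft r0 s0 r - s0 - RInt (fun t => Ft t (Sol Ft r0 s0 t)) r0 r = 0); [|lra].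
  apply (zero_of_bound _ (C * (1 + L*(r-r0)))). intros k.
  assert (E : RInt (fun t => Ft t (iter Ft r0 s0 k t) - Ft t (Sol Ft r0 s0 t)) r0 r =
          RInt (fun t => Ft t (iter Ft r0 s0 k t)) r0 r - RInt (fun t => Ft t (Sol Ft r0 s0 t)) r0 r).
  { exact (RInt_minus (V:=R_CompleteNormedModule) _ _ r0 r
            (exRI _ _ _ (g_cont _ _ _ Hc HLL k)) (exRI _ _ _ (gS_cont _ _ _ Hc HLL))). }
  assert (H1 : Rabs (RInt (fun t => Ft t (iter Ft r0 s0 k t) - Ft t (Sol Ft r0 s0 t)) r0 r) <= L*(C*(/2)^k)*(r - r0)).
  { rewrite <- RInt_const_val. apply RInt_abs_bound; auto.
    - intros t. apply (continuous_minus (V:=R_NormedModule)). apply g_cont; auto. apply gS_cont; auto.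
    - apply ex_RInt_const.
    - intros t Ht. eapply Rle_trans. apply HL; lra. apply Rmult_le_compat_l; [lra|].
      rewrite <- Rabs_Ropp. replace (- (iter Ft r0 s0 k t - Sol Ft r0 s0 t)) with (Sol Ft r0 s0 t - iter Ft r0 s0 k t) by ring.
      apply Hb; lra. }
  rewrite E in H1.
  pose proof (Hb (S k) r (Rle_refl r)) as H2.
  simpl iter in H2. rewrite Rmax_left in H2 by lra.
  set (I1 := RInt (fun t => Ft t (iter Ft r0 s0 k t)) r0 r) in *.
  set (I2 := RInt (fun t => Ft t (Sol Ft r0 s0 t)) r0 r) in *.
  replace (Sol Ft r0 s0 r - s0 - I2) with ((Sol Ft r0 s0 r - (s0 + I1)) + (I1 - I2)) by ring.
  eapply Rle_trans; [apply Rabs_triang|].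
  replace ((/2)^(S k)) with ((/2)^k * /2) in H2 by (simpl; ring).
  assert (0 <= C * (/2)^k) by (apply Rmult_le_pos; [lra|apply pow_le; lra]).
  nra.
Qed.

Lemma picard (Ft : R -> R -> R) r0 s0
  (Hc : forall x t, continuous (fun t => Ft t x) t) (HLL : LocLip Ft) :
  exists S : R -> R, (forall t, t <= r0 -> S t = s0) /\ (forall t, continuous S t) /\
    forall r, r0 < r -> derivable_pt_lim S r (Ft r (S r)).
Proof.
  exists (Sol Ft r0 s0). split; [|split].
  - apply Sol_left.
  - apply Sol_cont; auto.
  - intros r Hr. apply is_derive_Reals.
    assert (D : is_derive (fun u => Sol Ft r0 s0 u - s0) r (Ft r (Sol Ft r0 s0 r))).
    { apply (is_derive_RInt (V:=R_NormedModule) (fun t => Ft t (Sol Ft r0 s0 t)) (fun u => Sol Ft r0 s0 u - s0) r0 r).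
      - apply (locally_interval _ r (Finite r0) p_infty); simpl; auto.
        intros y Hy _. rewrite (Sol_eq Ft r0 s0 Hc HLL y) by lra.
        assert (E: forall a b : R, a + b - a = b) by (intros; ring). rewrite E.
        exact (RInt_correct (V:=R_CompleteNormedModule) _ r0 y (exRI _ _ _ (gS_cont _ _ _ Hc HLL))).
      - apply gS_cont; auto. }
    apply is_derive_Reals.
    apply is_derive_Reals in D.
    pose proof (derivable_pt_lim_plus _ _ r _ _ D (derivable_pt_lim_const s0 r)) as D2.
    rewrite Rplus_0_r in D2.
    intros eps He. destruct (D2 eps He) as [d Hd]. exists d. intros h Hh Hhd.
    specialize (Hd h Hh Hhd). unfold plus_fct, fct_cte in Hd.
    replace (Sol Ft r0 s0 (r + h) - s0 + s0 - (Sol Ft r0 s0 r - s0 + s0)) with (Sol Ft r0 s0 (r+h) - Sol Ft r0 s0 r) in Hd by ring.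
    exact Hd.
Qed.


Lemma barrier (h : R -> R) r0 (Hc : forall t, continuous h t) (H0 : 0 < h r0)
  (Hd : forall t, r0 < t -> h t <= 0 -> exists d, derivable_pt_lim h t d /\ 0 < d) :
  forall t, r0 <= t -> 0 < h t.
Proof.
  intros t2 Ht2. apply Rnot_le_lt. intros Hneg.
  assert (Ht2' : r0 < t2) by (destruct (Req_dec t2 r0); [subst; lra|lra]).
  set (E := fun x => r0 <= x <= t2 /\ forall u, r0 <= u <= x -> 0 < h u).
  destruct (completeness E) as [tau [Hub Hlub]].
  { exists t2. intros x [Hx _]. lra. }
  { exists r0. split; [lra|]. intros u Hu. replace u with r0 by lra. auto. }
  assert (Hr0tau : r0 <= tau).
  { apply Hub. split; [lra|]. intros u Hu. replace u with r0 by lra. auto. }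
  assert (Htaut2 : tau <= t2) by (apply Hlub; intros x [Hx _]; lra).
  assert (A : forall u, r0 <= u < tau -> 0 < h u).
  { intros u Hu. destruct (classic (exists x, E x /\ u < x)) as [[x [[_ Hx] Hux]]|Hno].
    - apply Hx; lra.
    - exfalso. assert (tau <= u); [|lra]. apply Hlub. intros x Ex.
      apply Rnot_lt_le. intros Hlt. apply Hno. exists x; auto. }
  assert (B : h tau <= 0).
  { apply Rnot_lt_le. intros Hpos.
    destruct (proj1 (cont_eps _ _) (Hc tau) (h tau) Hpos) as [d [Hd0 Hd']].
    assert (tau < t2) by (destruct (Req_dec tau t2); [subst; lra|lra]).
    set (x := Rmin (tau + d/2) t2).
    assert (tau < x) by (unfold x; apply Rmin_glb_lt; lra).
    assert (HEx : E x).
    { split. split; [lra|apply Rmin_r]. intros u Hu.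
      destruct (Rlt_le_dec u tau). apply A; lra.
      assert (Hud : Rabs (u - tau) < d).
      { pose proof (Rmin_l (tau + d/2) t2). apply Rabs_def1; unfold x in *; lra. }
      specialize (Hd' u Hud). apply Rabs_def2 in Hd'. lra. }
    specialize (Hub x HEx). lra. }
  assert (C : r0 < tau) by (destruct (Req_dec tau r0) as [->|]; lra).
  destruct (Hd tau C B) as [d [Hder Hdpos]].
  destruct (Hder (d/2) ltac:(lra)) as [del Hdel].
  set (k := - Rmin (del/2) ((tau - r0)/2)).
  assert (Hk1 : 0 < Rmin (del/2) ((tau - r0)/2)) by (apply Rmin_glb_lt; pose proof (cond_pos del); lra).
  assert (Hk : k <> 0) by (unfold k; lra).
  assert (Hkd : Rabs k < del).
  { unfold k. rewrite Rabs_Ropp, Rabs_pos_eq by lra. pose proof (Rmin_l (del/2) ((tau - r0)/2)). pose proof (cond_pos del). lra. }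
  specialize (Hdel k Hk Hkd). apply Rabs_def2 in Hdel.
  assert (Hq : 0 < (h (tau + k) - h tau) / k) by lra.
  assert (Hkneg : k < 0) by (unfold k; lra).
  assert (h (tau + k) - h tau < 0).
  { apply Rnot_le_lt. intros Hge.
    assert ((h (tau + k) - h tau) / k <= 0).
    { assert (/k < 0) by (apply Rinv_lt_0_compat; auto). unfold Rdiv. nra. } lra. }
  assert (0 < h (tau + k)).
  { apply A. pose proof (Rmin_r (del/2) ((tau - r0)/2)). unfold k in *. lra. }
  lra.
Qed.


Lemma cpt_mult f g x : continuity_pt f x -> continuity_pt g x -> continuity_pt (fun y => f y * g y) x.
Proof. intros; apply (continuity_pt_mult f g x); auto. Qed.
Lemma cpt_plus f g x : continuity_pt f x -> continuity_pt g x -> continuity_pt (fun y => f y + g y) x.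
Proof. intros; apply (continuity_pt_plus f g x); auto. Qed.
Lemma cpt_minus f g x : continuity_pt f x -> continuity_pt g x -> continuity_pt (fun y => f y - g y) x.
Proof. intros; apply (continuity_pt_minus f g x); auto. Qed.
Lemma cpt_inv f x : continuity_pt f x -> f x <> 0 -> continuity_pt (fun y => / f y) x.
Proof. intros; apply (continuity_pt_inv f x); auto. Qed.
Lemma cpt_const c x : continuity_pt (fun _ => c) x.
Proof. apply continuity_pt_const. intros a b; auto. Qed.
Lemma cpt_id x : continuity_pt (fun y => y) x.
Proof. apply derivable_continuous_pt. apply derivable_pt_id. Qed.
Lemma cpt_comp f g x : continuity_pt f x -> continuity_pt g (f x) -> continuity_pt (fun y => g (f y)) x.
Proof. intros; apply (continuity_pt_comp f g x); auto. Qed.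
Lemma cpt_abs f x : continuity_pt f x -> continuity_pt (fun y => Rabs (f y)) x.
Proof. intros; apply cpt_comp; auto. apply Rcontinuity_abs. Qed.
Lemma cpt_Rmax f g x : continuity_pt f x -> continuity_pt g x -> continuity_pt (fun y => Rmax (f y) (g y)) x.
Proof.
  intros. apply (continuity_pt_ext (fun y => (f y + g y + Rabs (f y - g y))/2)).
  { intros y. unfold Rmax, Rabs. destruct Rle_dec; destruct Rcase_abs; lra. }
  apply (cpt_mult _ (fun _ => /2)); [|apply cpt_const].
  apply cpt_plus; [apply cpt_plus; auto|]. apply cpt_abs, cpt_minus; auto.
Qed.
Lemma cpt_Rmin f g x : continuity_pt f x -> continuity_pt g x -> continuity_pt (fun y => Rmin (f y) (g y)) x.
Proof.
  intros. apply (continuity_pt_ext (fun y => (f y + g y - Rabs (f y - g y))/2)).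
  { intros y. unfold Rmin, Rabs. destruct Rle_dec; destruct Rcase_abs; lra. }
  apply (cpt_mult _ (fun _ => /2)); [|apply cpt_const].
  apply cpt_minus; [apply cpt_plus; auto|]. apply cpt_abs, cpt_minus; auto.
Qed.
Lemma cpt_ext_loc f g x : (exists d, 0 < d /\ forall y, Rabs (y - x) < d -> f y = g y) ->
  continuity_pt f x -> continuity_pt g x.
Proof.
  intros [d [Hd H]] Hf. apply continuity_pt_filterlim. apply continuity_pt_filterlim in Hf.
  assert (Hfx : f x = g x) by (apply H; rewrite Rminus_eq_0, Rabs_R0; auto).
  apply (continuous_ext_loc g f x); auto.
  exists (mkposreal d Hd). intros y Hy. apply H. exact Hy.
Qed.

Lemma rpow_nonneg s a : 0 <= rpow s a.
Proof. unfold rpow, Rpower. destruct Rle_dec; [lra|left; apply exp_pos]. Qed.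

Lemma rpow_mono s t a : 0 < a -> 0 <= s <= t -> rpow s a <= rpow t a.
Proof.
  intros Ha Hst. unfold rpow. destruct (Rle_dec s 0); destruct (Rle_dec t 0).
  - lra.
  - unfold Rpower; left; apply exp_pos.
  - lra.
  - apply Rle_Rpower_l; lra.
Qed.

Lemma rpow_cont s a : 0 < s -> continuity_pt (fun x => rpow x a) s.
Proof.
  intros Hs. apply (cpt_ext_loc (fun x => Rpower x a)).
  - exists s; split; auto. intros y Hy. apply Rabs_def2 in Hy. unfold rpow. destruct Rle_dec; [lra|auto].
  - apply derivable_continuous_pt. exists (a * Rpower s (a - 1)). apply derivable_pt_lim_power; auto.
Qed.

Definition gsum (l : list (R*R)) s := fold_right (fun p acc => fst p * rpow s (snd p) + acc) 0 l.

Lemma gsum_nonneg l s : List.Forall (fun p => 0 <= fst p /\ 0 < snd p) l -> 0 <= gsum l s.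
Proof.
  induction 1 as [|p l' Hp HF IH]; simpl; [lra|]. destruct Hp. pose proof (rpow_nonneg s (snd p)). fold (gsum l' s). nra.
Qed.

Lemma gsum_mono l s t : List.Forall (fun p => 0 <= fst p /\ 0 < snd p) l -> 0 <= s <= t -> gsum l s <= gsum l t.
Proof.
  intros HF Hst. induction HF as [|p l' Hp HF IH]; simpl; [lra|]. destruct Hp.
  pose proof (rpow_mono s t (snd p) H0 Hst). pose proof (rpow_nonneg s (snd p)). fold (gsum l' s) (gsum l' t). nra.
Qed.

Lemma gsum_cont l s : List.Forall (fun p => 0 <= fst p /\ 0 < snd p) l -> 0 < s -> continuity_pt (gsum l) s.
Proof.
  intros HF Hs. induction HF as [|p l' Hp HF IH]; simpl.
  - apply cpt_const.
  - destruct Hp. apply (cpt_plus (fun y => fst p * rpow y (snd p)) (gsum l')); auto.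
    apply cpt_mult; [apply cpt_const|]. apply rpow_cont; auto.
Qed.

Lemma gfun_eq a0 l s : gfun a0 l s = a0 + gsum l s.
Proof. reflexivity. Qed.

Lemma G_form a0 l c w W : g_admissible a0 l -> 0 <= w <= W ->
  exists g, a0 <= g <= gfun a0 l (Rabs c * W) /\ Gfun a0 l (c*w) = g*c*w.
Proof.
  intros [Ha0 [HF _]] Hw. exists (gfun a0 l (Rabs (c*w))). split; [split|].
  - rewrite gfun_eq. pose proof (gsum_nonneg l (Rabs (c*w)) HF). lra.
  - rewrite !gfun_eq. apply Rplus_le_compat_l. apply gsum_mono; auto.
    rewrite Rabs_mult, (Rabs_pos_eq w) by lra. split; [apply Rmult_le_pos; [apply Rabs_pos|lra]|].
    apply Rmult_le_compat_l; [apply Rabs_pos|lra].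
  - unfold Gfun. ring.
Qed.

Lemma Gfun_cont a0 l c n t : g_admissible a0 l -> 0 < t ->
  continuity_pt (fun t => Gfun a0 l (c * / t^(n-1))) t.
Proof.
  intros [Ha0 [HF _]] Ht. destruct (Req_dec c 0) as [->|Hc].
  - apply (continuity_pt_ext (fun _ => 0)). { intros y. unfold Gfun. ring. } apply cpt_const.
  - assert (Hu : continuity_pt (fun t => c * / t^(n-1)) t).
    { apply cpt_mult; [apply cpt_const|]. apply cpt_inv.
      apply derivable_continuous_pt. apply derivable_pt_pow. apply pow_nonzero. lra. }
    assert (Hpos : 0 < Rabs (c * / t^(n-1))).
    { apply Rabs_pos_lt. apply Rmult_integral_contrapositive_currified; auto.
      apply Rinv_neq_0_compat. apply pow_nonzero; lra. }
    unfold Gfun. apply cpt_mult; auto. apply (continuity_pt_ext (fun y => a0 + gsum l (Rabs (c * / y^(n-1))))); [reflexivity|].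
    apply cpt_plus; [apply cpt_const|]. apply cpt_comp; [apply cpt_abs; auto|].
    apply gsum_cont; auto.
Qed.


Lemma C1_cont g dg x : C1_open g dg 0 1 -> 0 < x < 1 -> continuity_pt g x.
Proof. intros H Hx. apply derivable_continuous_pt. exists (dg x). apply (H x Hx). Qed.

Lemma C1_Ffun dpc ddpc f df : C1_open dpc ddpc 0 1 -> C1_open f df 0 1 ->
  (forall x, 0 < x < 1 -> 0 < dpc x * f x) ->
  C1_open (Ffun dpc f) (fun x => - (ddpc x * f x + dpc x * df x) / (dpc x * f x)^2) 0 1.
Proof.
  intros Hp Hf Hpos x Hx. split.
  - unfold Ffun. apply is_derive_Reals. apply (is_derive_inv (fun y => dpc y * f y)).
    + apply is_derive_Reals. apply (derivable_pt_lim_mult dpc f x); [apply Hp|apply Hf]; auto.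
    + specialize (Hpos x Hx). lra.
  - apply cpt_mult.
    + apply (continuity_pt_ext (fun y => - (ddpc y * f y + dpc y * df y))); [reflexivity|].
      apply (continuity_pt_opp (fun y => ddpc y * f y + dpc y * df y)).
      apply cpt_plus; apply cpt_mult; try apply (C1_cont _ _ x Hp Hx); try apply (C1_cont _ _ x Hf Hx); auto.
      apply (Hp x Hx). apply (Hf x Hx).
    + apply cpt_inv. 
      * apply (continuity_pt_ext (fun y => (dpc y * f y) * (dpc y * f y * 1))); [intros; simpl; ring|].
        assert (continuity_pt (fun y => dpc y * f y) x) by (apply cpt_mult; [apply (C1_cont _ _ x Hp Hx)|apply (C1_cont _ _ x Hf Hx)]).
        apply cpt_mult; auto. apply cpt_mult; auto. apply cpt_const.
      * specialize (Hpos x Hx). apply pow_nonzero. lra.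
Qed.

Lemma C1_lip g dg al be : C1_open g dg 0 1 -> 0 < al -> al <= be -> be < 1 ->
  exists L, 0 <= L /\ forall x y, al <= x <= be -> al <= y <= be -> Rabs (g x - g y) <= L * Rabs (x - y).
Proof.
  intros H Ha Hab Hb.
  destruct (continuity_ab_maj (fun x => Rabs (dg x)) al be Hab) as [m [Hm Hmr]].
  { intros c Hc. apply cpt_abs. apply (H c). lra. }
  exists (Rabs (dg m)). split; [apply Rabs_pos|].
  intros x y Hx Hy.
  destruct (MVT_abs g dg y x) as [c [Hc Hcr]].
  { intros c Hc. apply H. pose proof (Rmin_l y x). pose proof (Rmin_r y x). pose proof (Rmax_l y x). pose proof (Rmax_r y x).
    assert (Rmin y x >= al) by (unfold Rmin; destruct Rle_dec; lra).
    assert (Rmax y x <= be) by (unfold Rmax; destruct Rle_dec; lra). lra. }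
  rewrite Hc. apply Rmult_le_compat_r; [apply Rabs_pos|].
  apply Hm. assert (Rmin y x >= al) by (unfold Rmin; destruct Rle_dec; lra).
  assert (Rmax y x <= be) by (unfold Rmax; destruct Rle_dec; lra). lra.
Qed.

Lemma f_inc f df : cont_closed f 0 1 -> C1_open f df 0 1 -> f 0 = 0 -> (forall x, 0 < x < 1 -> 0 < df x) ->
  (forall x y, 0 < x -> x < y -> y < 1 -> f x < f y) /\ (forall x, 0 < x < 1 -> 0 < f x).
Proof.
  intros Hc Hd H0 Hdf.
  assert (Hinc : forall x y, 0 < x -> x < y -> y < 1 -> f x < f y).
  { intros x y Hx Hxy Hy. destruct (MVT_cor2 f df x y Hxy) as [c [Hc' Hcr]].
    { intros c Hc'. apply Hd. lra. }
    assert (0 < df c) by (apply Hdf; lra). nra. }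
  split; auto. intros x Hx.
  assert (Hh : 0 <= f (x/2)).
  { apply Rnot_lt_le. intros Hlt.
    destruct (Hc 0 ltac:(lra) (- f (x/2)) ltac:(lra)) as [d [Hd0 Hd']].
    set (e := Rmin (d/2) (x/4)).
    assert (0 < e) by (unfold e; apply Rmin_glb_lt; lra).
    assert (e <= x/4) by apply Rmin_r. assert (e <= d/2) by apply Rmin_l.
    specialize (Hd' e ltac:(lra) ltac:(rewrite Rminus_0_r, Rabs_pos_eq; lra)).
    rewrite H0, Rminus_0_r in Hd'. apply Rabs_def2 in Hd'.
    specialize (Hinc e (x/2) ltac:(lra) ltac:(lra) ltac:(lra)). lra. }
  specialize (Hinc (x/2) x ltac:(lra) ltac:(lra) ltac:(lra)). lra.
Qed.

Lemma f_dec f df : cont_closed f 0 1 -> C1_open f df 0 1 -> f 1 = 0 -> (forall x, 0 < x < 1 -> df x < 0) ->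
  (forall x y, 0 < x -> x < y -> y < 1 -> f y < f x) /\ (forall x, 0 < x < 1 -> 0 < f x).
Proof.
  intros Hc Hd H0 Hdf.
  assert (Hdec : forall x y, 0 < x -> x < y -> y < 1 -> f y < f x).
  { intros x y Hx Hxy Hy. destruct (MVT_cor2 f df x y Hxy) as [c [Hc' Hcr]].
    { intros c Hc'. apply Hd. lra. }
    assert (df c < 0) by (apply Hdf; lra). nra. }
  split; auto. intros x Hx.
  set (z := (x+1)/2).
  assert (Hh : 0 <= f z).
  { apply Rnot_lt_le. intros Hlt.
    destruct (Hc 1 ltac:(lra) (- f z) ltac:(lra)) as [d [Hd0 Hd']].
    set (e := Rmin (d/2) ((1-x)/4)).
    assert (0 < e) by (unfold e; apply Rmin_glb_lt; lra).
    assert (e <= (1-x)/4) by apply Rmin_r. assert (e <= d/2) by apply Rmin_l.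
    specialize (Hd' (1-e) ltac:(lra) ltac:(rewrite Rabs_left; lra)).
    rewrite H0, Rminus_0_r in Hd'. apply Rabs_def2 in Hd'.
    specialize (Hdec z (1-e) ltac:(unfold z; lra) ltac:(unfold z; lra) ltac:(lra)). lra. }
  specialize (Hdec x z ltac:(lra) ltac:(unfold z; lra) ltac:(unfold z; lra)). lra.
Qed.

Lemma ratio_ineq r A B : 0 < A -> 0 < B -> r * B <= A -> r * / A <= / B.
Proof.
  intros HA HB H.
  replace (r * / A) with ((r*B) * /(A*B)) by (field; lra).
  replace (/ B) with (A * /(A*B)) by (field; lra).
  apply Rmult_le_compat_r; auto. left; apply Rinv_0_lt_compat; nra.
Qed.

Lemma small_0 (p f : R -> R) : (forall M, exists d, 0<d /\ forall S, 0<S<d -> M < p S * f S) ->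
  forall e, 0 < e -> exists d, 0 < d /\ forall S, 0 < S < d -> Ffun p f S < e.
Proof.
  intros H e He. destruct (H (/e)) as [d [Hd H']]. exists d; split; auto.
  intros S HS. specialize (H' S HS). unfold Ffun.
  assert (0 < /e) by (apply Rinv_0_lt_compat; auto).
  rewrite <- (Rinv_inv e). apply Rinv_lt_contravar; auto. nra.
Qed.

Lemma small_1 (p f : R -> R) : (forall M, exists d, 0<d /\ forall S, 1-d<S<1 -> M < p S * f S) ->
  forall e, 0 < e -> exists d, 0 < d /\ forall S, 1-d < S < 1 -> Ffun p f S < e.
Proof.
  intros H e He. destruct (H (/e)) as [d [Hd H']]. exists d; split; auto.
  intros S HS. specialize (H' S HS). unfold Ffun.
  assert (0 < /e) by (apply Rinv_0_lt_compat; auto).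
  rewrite <- (Rinv_inv e). apply Rinv_lt_contravar; auto. nra.
Qed.

Lemma ratio_0 (p fs fb : R -> R) :
  (forall x, 0 < x < 1 -> 0 < p x) -> (forall x, 0 < x < 1 -> 0 < fs x) ->
  cont_closed fs 0 1 -> fs 0 = 0 ->
  (forall x y, 0 < x -> x < y -> y < 1 -> fb y < fb x) -> (forall x, 0 < x < 1 -> 0 < fb x) ->
  forall r, 0 < r -> exists d, 0 < d /\ forall S, 0 < S < d -> r * Ffun p fb S <= Ffun p fs S.
Proof.
  intros Hp Hs Hc H0 Hdec Hb r Hr.
  assert (Hb2 : 0 < fb (1/2)) by (apply Hb; lra).
  destruct (Hc 0 ltac:(lra) (fb (1/2) / r) ltac:(apply Rdiv_lt_0_compat; auto)) as [d [Hd Hd']].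
  exists (Rmin d (1/2)). split; [apply Rmin_glb_lt; lra|].
  intros S HS. pose proof (Rmin_l d (1/2)). pose proof (Rmin_r d (1/2)).
  specialize (Hd' S ltac:(lra) ltac:(rewrite Rminus_0_r, Rabs_pos_eq; lra)).
  rewrite H0, Rminus_0_r in Hd'. apply Rabs_def2 in Hd'.
  assert (fb (1/2) < fb S) by (apply Hdec; lra).
  pose proof (Hp S ltac:(lra)). pose proof (Hs S ltac:(lra)).
  unfold Ffun. apply ratio_ineq; try (apply Rmult_lt_0_compat; auto; apply Hb; lra).
  assert (r * fs S < fb (1/2)).
  { apply (Rmult_lt_reg_r (/r)). apply Rinv_0_lt_compat; auto.
    replace (r * fs S * / r) with (fs S) by (field; lra). exact (proj1 Hd'). }
  nra.
Qed.

Lemma ratio_1 (p fs fb : R -> R) :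
  (forall x, 0 < x < 1 -> 0 < p x) -> (forall x, 0 < x < 1 -> 0 < fs x) ->
  cont_closed fs 0 1 -> fs 1 = 0 ->
  (forall x y, 0 < x -> x < y -> y < 1 -> fb x < fb y) -> (forall x, 0 < x < 1 -> 0 < fb x) ->
  forall r, 0 < r -> exists d, 0 < d /\ forall S, 1 - d < S < 1 -> r * Ffun p fb S <= Ffun p fs S.
Proof.
  intros Hp Hs Hc H0 Hinc Hb r Hr.
  assert (Hb2 : 0 < fb (1/2)) by (apply Hb; lra).
  destruct (Hc 1 ltac:(lra) (fb (1/2) / r) ltac:(apply Rdiv_lt_0_compat; auto)) as [d [Hd Hd']].
  exists (Rmin d (1/2)). split; [apply Rmin_glb_lt; lra|].
  intros S HS. pose proof (Rmin_l d (1/2)). pose proof (Rmin_r d (1/2)).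
  specialize (Hd' S ltac:(lra) ltac:(rewrite Rabs_left; lra)).
  rewrite H0, Rminus_0_r in Hd'. apply Rabs_def2 in Hd'.
  assert (fb (1/2) < fb S) by (apply Hinc; lra).
  pose proof (Hp S ltac:(lra)). pose proof (Hs S ltac:(lra)).
  unfold Ffun. apply ratio_ineq; try (apply Rmult_lt_0_compat; auto; apply Hb; lra).
  assert (r * fs S < fb (1/2)).
  { apply (Rmult_lt_reg_r (/r)). apply Rinv_0_lt_compat; auto.
    replace (r * fs S * / r) with (fs S) by (field; lra). exact (proj1 Hd'). }
  nra.
Qed.

Lemma endpoint_0 F dF : C1_open F dF 0 1 ->
  (forall e, 0 < e -> exists d, 0 < d /\ forall S, 0 < S < d -> F S < e) ->
  limsup_deriv_0_finite F ->
  exists M d, 0 < M /\ 0 < d /\ forall S, 0 < S < d -> F S <= M * S.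
Proof.
  intros HC Hs [M0 [d0 [Hd0 Hl]]].
  exists (Rmax M0 0 + 1), (Rmin d0 1). split; [pose proof (Rmax_r M0 0); lra|].
  split; [apply Rmin_glb_lt; lra|].
  intros S HS. pose proof (Rmin_l d0 1). pose proof (Rmin_r d0 1).
  apply Rnot_lt_le. intros Hlt.
  destruct (Hs (F S - (Rmax M0 0 + 1) * S) ltac:(lra)) as [d [Hd Hd']].
  set (e := Rmin (d/2) (S/2)).
  assert (0 < e) by (unfold e; apply Rmin_glb_lt; lra).
  assert (e <= S/2) by apply Rmin_r. assert (e <= d/2) by apply Rmin_l.
  specialize (Hd' e ltac:(lra)).
  destruct (MVT_cor2 F dF e S ltac:(lra)) as [c [Hc Hcr]].
  { intros c Hc. apply HC. lra. }
  assert (dF c <= M0) by (apply (Hl c); [lra|apply HC; lra]).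
  pose proof (Rmax_l M0 0). pose proof (Rmax_r M0 0).
  assert (dF c * (S - e) <= Rmax M0 0 * S) by nra.
  nra.
Qed.

Lemma endpoint_1 F dF : C1_open F dF 0 1 ->
  (forall e, 0 < e -> exists d, 0 < d /\ forall S, 1 - d < S < 1 -> F S < e) ->
  liminf_deriv_1_finite F ->
  exists M d, 0 < M /\ 0 < d /\ forall S, 1 - d < S < 1 -> F S <= M * (1 - S).
Proof.
  intros HC Hs [M0 [d0 [Hd0 Hl]]].
  exists (Rmax (-M0) 0 + 1), (Rmin d0 1). split; [pose proof (Rmax_r (-M0) 0); lra|].
  split; [apply Rmin_glb_lt; lra|].
  intros S HS. pose proof (Rmin_l d0 1). pose proof (Rmin_r d0 1).
  apply Rnot_lt_le. intros Hlt.
  destruct (Hs (F S - (Rmax (-M0) 0 + 1) * (1 - S)) ltac:(lra)) as [d [Hd Hd']].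
  set (e := Rmin (d/2) ((1-S)/2)).
  assert (0 < e) by (unfold e; apply Rmin_glb_lt; lra).
  assert (e <= (1-S)/2) by apply Rmin_r. assert (e <= d/2) by apply Rmin_l.
  specialize (Hd' (1-e) ltac:(lra)).
  destruct (MVT_cor2 F dF S (1-e) ltac:(lra)) as [c [Hc Hcr]].
  { intros c Hc. apply HC. lra. }
  assert (M0 <= dF c) by (apply (Hl c); [lra|apply HC; lra]).
  pose proof (Rmax_l (-M0) 0). pose proof (Rmax_r (-M0) 0).
  assert (- Rmax (-M0) 0 * (1 - S) <= dF c * (1 - e - S)) by nra.
  nra.
Qed.


Definition LCond (F : R -> R -> R) r0 := exists d K, 0 < d /\ 0 < K /\
  forall t S, r0 <= t -> 0 < S < d -> - K * S <= F t S.
Definition UCond (F : R -> R -> R) r0 := exists d K, 0 < d /\ 0 < K /\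
  forall t S, r0 <= t -> 1 - d < S < 1 -> F t S <= K * (1 - S).

Lemma cont_of_pt f x : continuity_pt f x -> continuous f x.
Proof. intros H. apply continuity_pt_filterlim in H. exact H. Qed.

Lemma clamp_lip c d x y : Rabs (Rmax c (Rmin d x) - Rmax c (Rmin d y)) <= Rabs (x - y).
Proof. unfold Rabs, Rmax, Rmin; repeat destruct Rcase_abs; repeat destruct Rle_dec; lra. Qed.

Lemma core (a b F1 F2 dF1 dF2 : R -> R) r0 s0 :
  0 < r0 -> 0 < s0 < 1 -> C1_open F1 dF1 0 1 -> C1_open F2 dF2 0 1 ->
  (forall t, r0 <= t -> continuity_pt a t) -> (forall t, r0 <= t -> continuity_pt b t) ->
  (exists A, forall t, r0 <= t -> Rabs (a t) <= A) -> (exists B, forall t, r0 <= t -> Rabs (b t) <= B) ->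
  LCond (fun t S => a t * F2 S - b t * F1 S) r0 -> UCond (fun t S => a t * F2 S - b t * F1 S) r0 ->
  exists S, global_solution (fun t S => a t * F2 S - b t * F1 S) r0 s0 S.
Proof.
  intros Hr0 Hs0 HF1 HF2 Hca Hcb [A HA] [B HB] [d1 [K1 [Hd1 [HK1 HLC]]]] [d2 [K2 [Hd2 [HK2 HUC]]]].
  assert (HA0 : 0 <= A) by (specialize (HA r0 (Rle_refl _)); pose proof (Rabs_pos (a r0)); lra).
  assert (HB0 : 0 <= B) by (specialize (HB r0 (Rle_refl _)); pose proof (Rabs_pos (b r0)); lra).
  set (K := K1 + K2).
  set (eps := Rmin (Rmin d1 d2) (Rmin (Rmin s0 (1-s0)) (1/2)) / 2).
  assert (Heps : 0 < eps /\ eps < d1 /\ eps < d2 /\ eps < s0 /\ eps < 1 - s0 /\ eps < 1/2).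
  { unfold eps. pose proof (Rmin_l d1 d2). pose proof (Rmin_r d1 d2).
    pose proof (Rmin_l s0 (1-s0)). pose proof (Rmin_r s0 (1-s0)).
    pose proof (Rmin_l (Rmin s0 (1-s0)) (1/2)). pose proof (Rmin_r (Rmin s0 (1-s0)) (1/2)).
    pose proof (Rmin_l (Rmin d1 d2) (Rmin (Rmin s0 (1-s0)) (1/2))).
    pose proof (Rmin_r (Rmin d1 d2) (Rmin (Rmin s0 (1-s0)) (1/2))).
    assert (0 < Rmin (Rmin d1 d2) (Rmin (Rmin s0 (1-s0)) (1/2))) by (repeat apply Rmin_glb_lt; lra).
    lra. }
  set (phi := fun t => eps * exp (-(2*K) * (t - r0))).
  assert (Hphi_pos : forall t, 0 < phi t) by (intros; unfold phi; apply Rmult_lt_0_compat; [lra|apply exp_pos]).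
  assert (Hphi_dec : forall t u, t <= u -> phi u <= phi t).
  { intros t u Htu. unfold phi. apply Rmult_le_compat_l; [lra|].
    destruct (Req_dec t u) as [->|]; [lra|]. left; apply exp_increasing. unfold K. nra. }
  assert (Hphi_r0 : phi r0 = eps) by (unfold phi; rewrite Rminus_eq_0, Rmult_0_r, exp_0; ring).
  assert (Hphi_le : forall t, r0 <= t -> phi t <= eps) by (intros t Ht; rewrite <- Hphi_r0; apply Hphi_dec; auto).
  set (tt := fun t => Rmax t r0).
  assert (Htt : forall t, r0 <= tt t) by (intros; apply Rmax_r).
  set (kap := fun t x => Rmax (phi (tt t)) (Rmin (1 - phi (tt t)) x)).
  assert (Hkap : forall t x, phi (tt t) <= kap t x <= 1 - phi (tt t)).
  { intros t x. pose proof (Hphi_le _ (Htt t)). unfold kap, Rmax, Rmin; repeat destruct Rle_dec; lra. }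
  set (Ft := fun t x => a (tt t) * F2 (kap t x) - b (tt t) * F1 (kap t x)).
  assert (Hphi_cont : forall t, continuity_pt phi t).
  { intros t. unfold phi. apply cpt_mult; [apply cpt_const|]. apply cpt_comp; [|apply derivable_continuous_pt, derivable_pt_exp].
    apply cpt_mult; [apply cpt_const|]. apply cpt_minus; [apply cpt_id|apply cpt_const]. }
  assert (Htt_cont : forall t, continuity_pt tt t) by (intros; unfold tt; apply cpt_Rmax; [apply cpt_id|apply cpt_const]).
  assert (Hc : forall x t, continuous (fun t => Ft t x) t).
  { intros x t. apply cont_of_pt. unfold Ft.
    assert (Hk : continuity_pt (fun t => kap t x) t).
    { unfold kap. apply cpt_Rmax. apply cpt_comp; auto. apply cpt_Rmin; [|apply cpt_const].
      apply cpt_minus; [apply cpt_const|]. apply cpt_comp; auto. }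
    pose proof (Hkap t x). pose proof (Hphi_pos (tt t)). pose proof (Hphi_le _ (Htt t)).
    apply cpt_minus; apply cpt_mult.
    - apply cpt_comp; auto.
    - apply cpt_comp; auto. apply (C1_cont _ _ _ HF2). lra.
    - apply cpt_comp; auto.
    - apply cpt_comp; auto. apply (C1_cont _ _ _ HF1). lra. }
  assert (HLL : LocLip Ft).
  { intros T. set (al := phi (Rmax T r0)).
    assert (Hal : 0 < al /\ al < 1/2) by (split; [apply Hphi_pos|pose proof (Hphi_le (Rmax T r0) (Rmax_r _ _)); unfold al; lra]).
    destruct (C1_lip F1 dF1 al (1 - al) HF1 ltac:(lra) ltac:(lra) ltac:(lra)) as [L1 [HL1 HL1']].
    destruct (C1_lip F2 dF2 al (1 - al) HF2 ltac:(lra) ltac:(lra) ltac:(lra)) as [L2 [HL2 HL2']].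
    exists (A*L2 + B*L1 + 1). split; [nra|].
    intros t x y Ht.
    assert (Hb : forall z, al <= kap t z <= 1 - al).
    { intros z. pose proof (Hkap t z). assert (al <= phi (tt t)); [|lra].
      unfold al. apply Hphi_dec. unfold tt, Rmax; repeat destruct Rle_dec; lra. }
    unfold Ft.
    replace (a (tt t) * F2 (kap t x) - b (tt t) * F1 (kap t x) - (a (tt t) * F2 (kap t y) - b (tt t) * F1 (kap t y)))
      with (a (tt t) * (F2 (kap t x) - F2 (kap t y)) - b (tt t) * (F1 (kap t x) - F1 (kap t y))) by ring.
    eapply Rle_trans; [apply Rabs_triang|]. rewrite Rabs_Ropp, !Rabs_mult.
    pose proof (HA (tt t) (Htt t)). pose proof (HB (tt t) (Htt t)).
    pose proof (HL2' (kap t x) (kap t y) (Hb x) (Hb y)). pose proof (HL1' (kap t x) (kap t y) (Hb x) (Hb y)).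
    pose proof (clamp_lip (phi (tt t)) (1 - phi (tt t)) x y). fold (kap t x) (kap t y) in H3.
    pose proof (Rabs_pos (a (tt t))). pose proof (Rabs_pos (b (tt t))).
    pose proof (Rabs_pos (F2 (kap t x) - F2 (kap t y))). pose proof (Rabs_pos (F1 (kap t x) - F1 (kap t y))).
    pose proof (Rabs_pos (kap t x - kap t y)). pose proof (Rabs_pos (x - y)).
    assert (Rabs (a (tt t)) * Rabs (F2 (kap t x) - F2 (kap t y)) <= A * (L2 * Rabs (x - y))).
    { apply Rmult_le_compat; auto. nra. }
    assert (Rabs (b (tt t)) * Rabs (F1 (kap t x) - F1 (kap t y)) <= B * (L1 * Rabs (x - y))).
    { apply Rmult_le_compat; auto. nra. }
    nra. }
  destruct (picard Ft r0 s0 Hc HLL) as [S [HS0 [HSc HSd]]].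
  assert (Hphi_der : forall t, derivable_pt_lim phi t (-(2*K) * phi t)).
  { intros t. apply is_derive_Reals. unfold phi. auto_derive; auto. assert (E2: forall e E k : R, e * (-k * 1 * E) = -k * (e*E)) by (intros; ring). apply E2. }
  assert (Htt_eq : forall t, r0 <= t -> tt t = t) by (intros; unfold tt; apply Rmax_left; auto).
  assert (Hlow : forall t, r0 <= t -> 0 < S t - phi t).
  { apply barrier.
    - intros t. apply cont_of_pt. apply cpt_minus; [|apply Hphi_cont]. apply continuity_pt_filterlim. apply HSc.
    - rewrite HS0, Hphi_r0 by lra. lra.
    - intros t Ht Hle. exists (Ft t (S t) - (-(2*K) * phi t)). split.
      + apply (derivable_pt_lim_minus S phi t). apply HSd; auto. apply Hphi_der.
      + assert (Hk : kap t (S t) = phi t).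
        { unfold kap. rewrite Htt_eq by lra. pose proof (Hphi_le t ltac:(lra)).
          unfold Rmax, Rmin; repeat destruct Rle_dec; lra. }
        unfold Ft. rewrite Hk, Htt_eq by lra.
        pose proof (Hphi_pos t). pose proof (Hphi_le t ltac:(lra)).
        pose proof (HLC t (phi t) ltac:(lra) ltac:(lra)). simpl in H1. unfold K. nra. }
  assert (Hhigh : forall t, r0 <= t -> 0 < (1 - phi t) - S t).
  { apply barrier.
    - intros t. apply cont_of_pt. apply cpt_minus; [apply cpt_minus; [apply cpt_const|apply Hphi_cont]|].
      apply continuity_pt_filterlim. apply HSc.
    - rewrite HS0, Hphi_r0 by lra. lra.
    - intros t Ht Hle. exists (0 - (-(2*K) * phi t) - Ft t (S t)). split.
      + apply (derivable_pt_lim_minus (fun t => 1 - phi t) S t).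
        apply (derivable_pt_lim_minus (fun _ => 1) phi t). apply derivable_pt_lim_const. apply Hphi_der.
        apply HSd; auto.
      + assert (Hk : kap t (S t) = 1 - phi t).
        { unfold kap. rewrite Htt_eq by lra. pose proof (Hphi_le t ltac:(lra)).
          unfold Rmax, Rmin; repeat destruct Rle_dec; lra. }
        unfold Ft. rewrite Hk, Htt_eq by lra.
        pose proof (Hphi_pos t). pose proof (Hphi_le t ltac:(lra)).
        pose proof (HUC t (1 - phi t) ltac:(lra) ltac:(lra)). simpl in H1. unfold K. nra. }
  assert (HFt : forall t, r0 <= t -> Ft t (S t) = a t * F2 (S t) - b t * F1 (S t)).
  { intros t Ht. pose proof (Hlow t Ht). pose proof (Hhigh t Ht).
    assert (kap t (S t) = S t) by (unfold kap; rewrite Htt_eq by lra; unfold Rmax, Rmin; repeat destruct Rle_dec; lra).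
    unfold Ft. rewrite H1, Htt_eq; auto. }
  exists S. split; [|split; [|split]].
  - apply HS0; lra.
  - intros r Hr. pose proof (Hlow r Hr). pose proof (Hhigh r Hr). pose proof (Hphi_pos r). lra.
  - intros e He. destruct (proj1 (cont_eps _ _) (HSc r0) e He) as [d [Hd Hd']].
    exists d. split; auto. intros r Hr. rewrite <- (HS0 r0) by lra. apply Hd'.
    rewrite Rabs_pos_eq; lra.
  - intros r Hr. rewrite <- HFt by lra. apply HSd; auto.
Qed.


Lemma pa_A c1 c2 g1 g2 G1 G2 w W F1 F2 M S :
  c2 <= 0 -> 0 <= c1 -> 0 <= g1 <= G1 -> 0 <= g2 <= G2 -> 0 < w <= W -> 0 <= F2 -> F2 <= F1 -> F1 <= M * S ->
  - ((G2 * (-c2) + G1 * c1) * W * M) * S <= g2*c2*w*F2 - g1*c1*w*F1.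
Proof.
  intros. assert (0 <= F1) by lra.
  assert (g2*(-c2)*w <= G2*(-c2)*W) by (apply Rmult_le_compat; nra).
  assert (g1*c1*w <= G1*c1*W) by (apply Rmult_le_compat; nra).
  assert (0 <= g2*(-c2)*w) by (apply Rmult_le_pos; nra).
  assert (0 <= g1*c1*w) by (apply Rmult_le_pos; nra).
  assert (g2*(-c2)*w*F2 <= g2*(-c2)*w*F1) by (apply Rmult_le_compat_l; auto).
  assert ((g2*(-c2)*w + g1*c1*w)*F1 <= (G2*(-c2)*W + G1*c1*W)*F1) by (apply Rmult_le_compat_r; lra).
  assert ((G2*(-c2)*W + G1*c1*W)*F1 <= (G2*(-c2)*W + G1*c1*W)*(M*S)) by (apply Rmult_le_compat_l; lra).
  nra.
Qed.

Lemma pa_B c1 g1 G1 w W F1 F2pos M S g2c2w :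
  0 <= c1 -> 0 <= g1 <= G1 -> 0 < w <= W -> 0 <= F1 -> F1 <= M * S -> 0 <= g2c2w -> 0 <= F2pos ->
  - (G1 * c1 * W * M) * S <= g2c2w*F2pos - g1*c1*w*F1.
Proof.
  intros.
  assert (g1*c1*w <= G1*c1*W) by (apply Rmult_le_compat; nra).
  assert (0 <= g1*c1*w) by (apply Rmult_le_pos; nra).
  assert ((g1*c1*w)*F1 <= (G1*c1*W)*F1) by (apply Rmult_le_compat_r; lra).
  assert ((G1*c1*W)*F1 <= (G1*c1*W)*(M*S)) by (apply Rmult_le_compat_l; nra).
  assert (0 <= g2c2w*F2pos) by nra.
  nra.
Qed.

Lemma pa_E c1 c2 g1 g2 a01 G2 w F1 F2 r :
  c1 < 0 -> c2 < 0 -> 0 < a01 <= g1 -> 0 <= g2 <= G2 -> 0 < w -> 0 <= F2 ->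
  r = G2 * (-c2) / (a01 * (-c1)) -> r * F2 <= F1 -> 0 <= g2*c2*w*F2 - g1*c1*w*F1.
Proof.
  intros.
  assert (G2*(-c2)*F2 <= a01*(-c1)*F1).
  { replace (G2*(-c2)*F2) with (a01*(-c1)*(r*F2)) by (subst r; field; nra).
    apply Rmult_le_compat_l; nra. }
  assert (g2*(-c2)*F2 <= G2*(-c2)*F2) by (apply Rmult_le_compat_r; [lra|]; apply Rmult_le_compat_r; lra).
  assert (0 <= F1) by (assert (0 <= r) by (subst r; apply Rmult_le_pos; [nra|left; apply Rinv_0_lt_compat; nra]); nra).
  assert (a01*(-c1)*F1 <= g1*(-c1)*F1) by (apply Rmult_le_compat_r; [lra|]; apply Rmult_le_compat_r; lra).
  assert (0 <= w * (g1*(-c1)*F1 - g2*(-c2)*F2)) by (apply Rmult_le_pos; lra).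
  nra.
Qed.

Lemma pa_D c1 c2 g1 g2 w F1 F2 : c1 <= 0 <= c2 -> 0 <= g1 -> 0 <= g2 -> 0 <= w -> 0 <= F1 -> 0 <= F2 ->
  0 <= g2*c2*w*F2 - g1*c1*w*F1.
Proof.
  intros. assert (0 <= g2*c2*w*F2) by (repeat apply Rmult_le_pos; lra).
  assert (0 <= g1*(-c1)*w*F1) by (repeat apply Rmult_le_pos; lra). nra.
Qed.


Lemma mkLC (F : R->R->R) r0 d K0 : 0 < d -> 0 <= K0 ->
  (forall t S, r0 <= t -> 0 < S < d -> - K0 * S <= F t S) -> LCond F r0.
Proof. intros Hd HK H. exists d, (K0+1). repeat split; try lra. intros t S Ht HS. specialize (H t S Ht HS). nra. Qed.

Lemma mkUC (F : R->R->R) r0 d K0 : 0 < d -> 0 <= K0 ->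
  (forall t S, r0 <= t -> 1 - d < S < 1 -> F t S <= K0 * (1 - S)) -> UCond F r0.
Proof. intros Hd HK H. exists d, (K0+1). repeat split; try lra. intros t S Ht HS. specialize (H t S Ht HS). nra. Qed.

Lemma min3 a b : 0 < a -> 0 < b -> 0 < Rmin a (Rmin b 1) /\ Rmin a (Rmin b 1) <= a /\ Rmin a (Rmin b 1) <= b /\ Rmin a (Rmin b 1) <= 1.
Proof.
  intros. pose proof (Rmin_l a (Rmin b 1)). pose proof (Rmin_r a (Rmin b 1)). pose proof (Rmin_l b 1). pose proof (Rmin_r b 1).
  repeat split; try lra. repeat apply Rmin_glb_lt; lra.
Qed.

Theorem theorem2p2
  (n : nat) (hn : (2 <= n)%nat)
  (a01 : R) (l1 : list (R * R)) (a02 : R) (l2 : list (R * R))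
  (hg1 : g_admissible a01 l1) (hg2 : g_admissible a02 l2)
  (f1 f2 df1 df2 : R -> R)
  (hf1c : cont_closed f1 0 1) (hf2c : cont_closed f2 0 1)
  (hf1d : C1_open f1 df1 0 1) (hf2d : C1_open f2 df2 0 1)
  (hf10 : f1 0 = 0) (hf21 : f2 1 = 0)
  (hdf1 : forall x, 0 < x < 1 -> 0 < df1 x)
  (hdf2 : forall x, 0 < x < 1 -> df2 x < 0)
  (pc dpc ddpc : R -> R)
  (hpc : forall x, 0 < x < 1 -> derivable_pt_lim pc x (dpc x))
  (hdpc : C1_open dpc ddpc 0 1)
  (hdpc_pos : forall x, 0 < x < 1 -> 0 < dpc x)
  (hP1 : forall M, exists delta, 0 < delta /\
           forall S, 0 < S < delta -> M < dpc S * f1 S)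
  (hP2 : forall M, exists delta, 0 < delta /\
           forall S, 1 - delta < S < 1 -> M < dpc S * f2 S)
  (c1 c2 r0 s0 : R) (hc : 0 < c1 ^ 2 + c2 ^ 2)
  (hr0 : 0 < r0) (hs0 : 0 < s0 < 1) :
  ( (c2 <= 0 < c1 /\ limsup_deriv_0_finite (Ffun dpc f1))
    \/ (c1 = 0 /\ c2 < 0 /\ limsup_deriv_0_finite (Ffun dpc f2))
    \/ (c1 <= 0 < c2 /\ liminf_deriv_1_finite (Ffun dpc f2))
    \/ (c2 = 0 /\ c1 < 0 /\ liminf_deriv_1_finite (Ffun dpc f1))
    \/ (0 < c1 /\ 0 < c2 /\ limsup_deriv_0_finite (Ffun dpc f1)
                          /\ liminf_deriv_1_finite (Ffun dpc f2))
    \/ (c1 < 0 /\ c2 < 0) ) ->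
  exists S : R -> R,
    global_solution (rhsF n a01 l1 a02 l2 c1 c2 dpc f1 f2) r0 s0 S.
Proof.
  intros Hcase.
  destruct (f_inc f1 df1 hf1c hf1d hf10 hdf1) as [Hinc1 Hpos1].
  destruct (f_dec f2 df2 hf2c hf2d hf21 hdf2) as [Hdec2 Hpos2].
  pose proof (C1_Ffun dpc ddpc f1 df1 hdpc hf1d ltac:(intros; apply Rmult_lt_0_compat; auto)) as HC1.
  pose proof (C1_Ffun dpc ddpc f2 df2 hdpc hf2d ltac:(intros; apply Rmult_lt_0_compat; auto)) as HC2.
  assert (HF1p : forall S, 0 < S < 1 -> 0 <= Ffun dpc f1 S).
  { intros; unfold Ffun; left; apply Rinv_0_lt_compat, Rmult_lt_0_compat; auto. }
  assert (HF2p : forall S, 0 < S < 1 -> 0 <= Ffun dpc f2 S).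
  { intros; unfold Ffun; left; apply Rinv_0_lt_compat, Rmult_lt_0_compat; auto. }
  pose proof (small_0 dpc f1 hP1) as Hs10.
  pose proof (small_1 dpc f2 hP2) as Hs21.
  pose proof (ratio_0 dpc f1 f2 hdpc_pos Hpos1 hf1c hf10 Hdec2 Hpos2) as Hr0.
  pose proof (ratio_1 dpc f2 f1 hdpc_pos Hpos2 hf2c hf21 Hinc1 Hpos1) as Hr1.
  assert (Hs20 : forall e, 0 < e -> exists d, 0 < d /\ forall S, 0 < S < d -> Ffun dpc f2 S < e).
  { intros e He. destruct (Hr0 1 Rlt_0_1) as [da [Hda Ha]]. destruct (Hs10 e He) as [db [Hdb Hb]].
    exists (Rmin da db). split; [apply Rmin_glb_lt; auto|]. intros S HS.
    pose proof (Rmin_l da db). pose proof (Rmin_r da db).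
    specialize (Ha S ltac:(lra)). specialize (Hb S ltac:(lra)). lra. }
  assert (Hs11 : forall e, 0 < e -> exists d, 0 < d /\ forall S, 1 - d < S < 1 -> Ffun dpc f1 S < e).
  { intros e He. destruct (Hr1 1 Rlt_0_1) as [da [Hda Ha]]. destruct (Hs21 e He) as [db [Hdb Hb]].
    exists (Rmin da db). split; [apply Rmin_glb_lt; auto|]. intros S HS.
    pose proof (Rmin_l da db). pose proof (Rmin_r da db).
    specialize (Ha S ltac:(lra)). specialize (Hb S ltac:(lra)). lra. }
  set (W := / r0^(n-1)).
  assert (HW : 0 < W) by (apply Rinv_0_lt_compat, pow_lt; auto).
  assert (Hw : forall t, r0 <= t -> 0 < / t^(n-1) <= W).
  { intros t Ht. split. apply Rinv_0_lt_compat, pow_lt; lra.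
    unfold W. apply Rinv_le_contravar. apply pow_lt; auto. apply pow_incr; lra. }
  destruct hg1 as [Ha01 [HFl1 HS1]]. destruct hg2 as [Ha02 [HFl2 HS2]].
  set (G1 := gfun a01 l1 (Rabs c1 * W)). set (G2 := gfun a02 l2 (Rabs c2 * W)).
  assert (Hform : forall t, r0 <= t -> exists g1 g2 w, a01 <= g1 <= G1 /\ a02 <= g2 <= G2 /\ 0 < w <= W /\
    Gfun a01 l1 (c1 * / t^(n-1)) = g1*c1*w /\ Gfun a02 l2 (c2 * / t^(n-1)) = g2*c2*w).
  { intros t Ht. pose proof (Hw t Ht).
    destruct (G_form a01 l1 c1 (/t^(n-1)) W (conj Ha01 (conj HFl1 HS1)) ltac:(lra)) as [g1 [Hg1 E1]].
    destruct (G_form a02 l2 c2 (/t^(n-1)) W (conj Ha02 (conj HFl2 HS2)) ltac:(lra)) as [g2 [Hg2 E2]].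
    exists g1, g2, (/t^(n-1)). repeat split; auto; unfold G1, G2; lra. }
  assert (HG1 : a01 <= G1) by (unfold G1; rewrite gfun_eq; pose proof (gsum_nonneg l1 (Rabs c1 * W) HFl1); lra).
  assert (HG2 : a02 <= G2) by (unfold G2; rewrite gfun_eq; pose proof (gsum_nonneg l2 (Rabs c2 * W) HFl2); lra).
  change (rhsF n a01 l1 a02 l2 c1 c2 dpc f1 f2) with
    (fun t S => Gfun a02 l2 (c2 * / t^(n-1)) * Ffun dpc f2 S - Gfun a01 l1 (c1 * / t^(n-1)) * Ffun dpc f1 S).
  assert (HLU : LCond (fun t S => Gfun a02 l2 (c2 * / t^(n-1)) * Ffun dpc f2 S - Gfun a01 l1 (c1 * / t^(n-1)) * Ffun dpc f1 S) r0 /\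
                UCond (fun t S => Gfun a02 l2 (c2 * / t^(n-1)) * Ffun dpc f2 S - Gfun a01 l1 (c1 * / t^(n-1)) * Ffun dpc f1 S) r0).
  { assert (HG1p : 0 < G1) by lra. assert (HG2p : 0 < G2) by lra.
    destruct Hcase as [[[Hc2 Hc1] Hls]|[[Hc1 [Hc2 Hls]]|[[[Hc1 Hc2] Hli]|[[Hc2 [Hc1 Hli]]|[[Hc1 [Hc2 [Hls Hli]]]|[Hc1 Hc2]]]]]].
    - (* 1a *) split.
      + destruct (endpoint_0 _ _ HC1 Hs10 Hls) as [M [d [HM [Hd HFM]]]].
        destruct (Hr0 1 Rlt_0_1) as [d' [Hd' Hr]].
        destruct (min3 d d' Hd Hd') as [Hm0 [Hm1 [Hm2 Hm3]]].
        apply (mkLC _ r0 (Rmin d (Rmin d' 1)) ((G2*(-c2)+G1*c1)*W*M)); auto.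
        { assert (0 <= G2*(-c2)) by (apply Rmult_le_pos; lra). assert (0 <= G1*c1) by (apply Rmult_le_pos; lra).
          apply Rmult_le_pos; [apply Rmult_le_pos|]; lra. }
        intros t S Ht HS. cbv beta. destruct (Hform t Ht) as [g1 [g2 [w [Hg1 [Hg2 [Hw' [E1 E2]]]]]]]. rewrite E1, E2.
        apply pa_A; try lra. apply HF2p; lra. specialize (Hr S ltac:(lra)); lra. apply HFM; lra.
      + apply (mkUC _ r0 1 0); try lra. intros t S Ht HS. cbv beta.
        destruct (Hform t Ht) as [g1 [g2 [w [Hg1 [Hg2 [Hw' [E1 E2]]]]]]]. rewrite E1, E2.
        pose proof (pa_D c2 c1 g2 g1 w (Ffun dpc f2 S) (Ffun dpc f1 S) ltac:(lra) ltac:(lra) ltac:(lra) ltac:(lra)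
          ltac:(apply HF2p; lra) ltac:(apply HF1p; lra)). lra.
    - (* 1b *) subst c1. split.
      + destruct (endpoint_0 _ _ HC2 Hs20 Hls) as [M [d [HM [Hd HFM]]]].
        destruct (min3 d d Hd Hd) as [Hm0 [Hm1 [Hm2 Hm3]]].
        apply (mkLC _ r0 (Rmin d (Rmin d 1)) (G2*(-c2)*W*M)); auto.
        { apply Rmult_le_pos; [apply Rmult_le_pos; [apply Rmult_le_pos|]|]; lra. }
        intros t S Ht HS. cbv beta. destruct (Hform t Ht) as [g1 [g2 [w [Hg1 [Hg2 [Hw' [E1 E2]]]]]]]. rewrite E1, E2.
        pose proof (pa_A 0 c2 g1 g2 G1 G2 w W (Ffun dpc f2 S) (Ffun dpc f2 S) M S ltac:(lra) ltac:(lra) ltac:(lra) ltac:(lra)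
          ltac:(lra) ltac:(apply HF2p; lra) ltac:(lra) ltac:(apply HFM; lra)) as H.
        replace ((G2 * - c2 + G1 * 0) * W * M) with (G2*(-c2)*W*M) in H by ring.
        replace (g1 * 0 * w * Ffun dpc f2 S) with 0 in H by ring.
        replace (g1 * 0 * w * Ffun dpc f1 S) with 0 by ring. lra.
      + apply (mkUC _ r0 1 0); try lra. intros t S Ht HS. cbv beta.
        destruct (Hform t Ht) as [g1 [g2 [w [Hg1 [Hg2 [Hw' [E1 E2]]]]]]]. rewrite E1, E2.
        pose proof (pa_D c2 0 g2 g1 w (Ffun dpc f2 S) (Ffun dpc f1 S) ltac:(lra) ltac:(lra) ltac:(lra) ltac:(lra)
          ltac:(apply HF2p; lra) ltac:(apply HF1p; lra)). lra.
    - (* 2a *) split.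
      + apply (mkLC _ r0 1 0); try lra. intros t S Ht HS. cbv beta.
        destruct (Hform t Ht) as [g1 [g2 [w [Hg1 [Hg2 [Hw' [E1 E2]]]]]]]. rewrite E1, E2.
        pose proof (pa_D c1 c2 g1 g2 w (Ffun dpc f1 S) (Ffun dpc f2 S) ltac:(lra) ltac:(lra) ltac:(lra) ltac:(lra)
          ltac:(apply HF1p; lra) ltac:(apply HF2p; lra)). lra.
      + destruct (endpoint_1 _ _ HC2 Hs21 Hli) as [M [d [HM [Hd HFM]]]].
        destruct (Hr1 1 Rlt_0_1) as [d' [Hd' Hr]].
        destruct (min3 d d' Hd Hd') as [Hm0 [Hm1 [Hm2 Hm3]]].
        apply (mkUC _ r0 (Rmin d (Rmin d' 1)) ((G1*(-c1)+G2*c2)*W*M)); auto.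
        { assert (0 <= G1*(-c1)) by (apply Rmult_le_pos; lra). assert (0 <= G2*c2) by (apply Rmult_le_pos; lra).
          apply Rmult_le_pos; [apply Rmult_le_pos|]; lra. }
        intros t S Ht HS. cbv beta. destruct (Hform t Ht) as [g1 [g2 [w [Hg1 [Hg2 [Hw' [E1 E2]]]]]]]. rewrite E1, E2.
        pose proof (pa_A c2 c1 g2 g1 G2 G1 w W (Ffun dpc f2 S) (Ffun dpc f1 S) M (1-S) ltac:(lra) ltac:(lra) ltac:(lra) ltac:(lra)
          ltac:(lra) ltac:(apply HF1p; lra) ltac:(specialize (Hr S ltac:(lra)); lra) ltac:(apply HFM; lra)) as H.
        lra.
    - (* 2b *) subst c2. split.
      + apply (mkLC _ r0 1 0); try lra. intros t S Ht HS. cbv beta.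
        destruct (Hform t Ht) as [g1 [g2 [w [Hg1 [Hg2 [Hw' [E1 E2]]]]]]]. rewrite E1, E2.
        pose proof (pa_D c1 0 g1 g2 w (Ffun dpc f1 S) (Ffun dpc f2 S) ltac:(lra) ltac:(lra) ltac:(lra) ltac:(lra)
          ltac:(apply HF1p; lra) ltac:(apply HF2p; lra)). lra.
      + destruct (endpoint_1 _ _ HC1 Hs11 Hli) as [M [d [HM [Hd HFM]]]].
        destruct (min3 d d Hd Hd) as [Hm0 [Hm1 [Hm2 Hm3]]].
        apply (mkUC _ r0 (Rmin d (Rmin d 1)) (G1*(-c1)*W*M)); auto.
        { apply Rmult_le_pos; [apply Rmult_le_pos; [apply Rmult_le_pos|]|]; lra. }
        intros t S Ht HS. cbv beta. destruct (Hform t Ht) as [g1 [g2 [w [Hg1 [Hg2 [Hw' [E1 E2]]]]]]]. rewrite E1, E2.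
        pose proof (pa_A 0 c1 g2 g1 G2 G1 w W (Ffun dpc f1 S) (Ffun dpc f1 S) M (1-S) ltac:(lra) ltac:(lra) ltac:(lra) ltac:(lra)
          ltac:(lra) ltac:(apply HF1p; lra) ltac:(lra) ltac:(apply HFM; lra)) as H.
        replace ((G1 * - c1 + G2 * 0) * W * M) with (G1*(-c1)*W*M) in H by ring.
        replace (g2 * 0 * w * Ffun dpc f1 S) with 0 in H by ring.
        replace (g2 * 0 * w * Ffun dpc f2 S) with 0 by ring. lra.
    - (* 3 *) split.
      + destruct (endpoint_0 _ _ HC1 Hs10 Hls) as [M [d [HM [Hd HFM]]]].
        destruct (min3 d d Hd Hd) as [Hm0 [Hm1 [Hm2 Hm3]]].
        apply (mkLC _ r0 (Rmin d (Rmin d 1)) (G1*c1*W*M)); auto.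
        { apply Rmult_le_pos; [apply Rmult_le_pos; [apply Rmult_le_pos|]|]; lra. }
        intros t S Ht HS. cbv beta. destruct (Hform t Ht) as [g1 [g2 [w [Hg1 [Hg2 [Hw' [E1 E2]]]]]]]. rewrite E1, E2.
        apply pa_B; try lra. apply HF1p; lra. apply HFM; lra.
        apply Rmult_le_pos; [apply Rmult_le_pos|]; lra. apply HF2p; lra.
      + destruct (endpoint_1 _ _ HC2 Hs21 Hli) as [M [d [HM [Hd HFM]]]].
        destruct (min3 d d Hd Hd) as [Hm0 [Hm1 [Hm2 Hm3]]].
        apply (mkUC _ r0 (Rmin d (Rmin d 1)) (G2*c2*W*M)); auto.
        { apply Rmult_le_pos; [apply Rmult_le_pos; [apply Rmult_le_pos|]|]; lra. }
        intros t S Ht HS. cbv beta. destruct (Hform t Ht) as [g1 [g2 [w [Hg1 [Hg2 [Hw' [E1 E2]]]]]]]. rewrite E1, E2.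
        pose proof (pa_B c2 g2 G2 w W (Ffun dpc f2 S) (Ffun dpc f1 S) M (1-S) (g1*c1*w) ltac:(lra) ltac:(lra) ltac:(lra)
          ltac:(apply HF2p; lra) ltac:(apply HFM; lra) ltac:(apply Rmult_le_pos; [apply Rmult_le_pos|]; lra) ltac:(apply HF1p; lra)) as H.
        lra.
    - (* 4 *) split.
      + assert (Hrp : 0 < G2*(-c2)/(a01*(-c1))) by (apply Rdiv_lt_0_compat; apply Rmult_lt_0_compat; lra).
        destruct (Hr0 _ Hrp) as [d [Hd Hr]].
        destruct (min3 d d Hd Hd) as [Hm0 [Hm1 [Hm2 Hm3]]].
        apply (mkLC _ r0 (Rmin d (Rmin d 1)) 0); try lra.
        intros t S Ht HS. cbv beta. destruct (Hform t Ht) as [g1 [g2 [w [Hg1 [Hg2 [Hw' [E1 E2]]]]]]]. rewrite E1, E2.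
        pose proof (pa_E c1 c2 g1 g2 a01 G2 w (Ffun dpc f1 S) (Ffun dpc f2 S) _ ltac:(lra) ltac:(lra) ltac:(lra) ltac:(lra)
          ltac:(lra) ltac:(apply HF2p; lra) eq_refl ltac:(apply Hr; lra)). lra.
      + assert (Hrp : 0 < G1*(-c1)/(a02*(-c2))) by (apply Rdiv_lt_0_compat; apply Rmult_lt_0_compat; lra).
        destruct (Hr1 _ Hrp) as [d [Hd Hr]].
        destruct (min3 d d Hd Hd) as [Hm0 [Hm1 [Hm2 Hm3]]].
        apply (mkUC _ r0 (Rmin d (Rmin d 1)) 0); try lra.
        intros t S Ht HS. cbv beta. destruct (Hform t Ht) as [g1 [g2 [w [Hg1 [Hg2 [Hw' [E1 E2]]]]]]]. rewrite E1, E2.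
        pose proof (pa_E c2 c1 g2 g1 a02 G1 w (Ffun dpc f2 S) (Ffun dpc f1 S) _ ltac:(lra) ltac:(lra) ltac:(lra) ltac:(lra)
          ltac:(lra) ltac:(apply HF1p; lra) eq_refl ltac:(apply Hr; lra)). lra. }
  destruct HLU as [HL HU].
  apply (core _ _ _ _ _ _ r0 s0 hr0 hs0 HC1 HC2); auto.
  - intros t Ht. apply Gfun_cont; [split; auto|lra].
  - intros t Ht. apply Gfun_cont; [split; auto|lra].
  - exists (G2 * Rabs c2 * W). intros t Ht.
    destruct (Hform t Ht) as [g1 [g2 [w [Hg1 [Hg2 [Hw' [E1 E2]]]]]]]. rewrite E2.
    rewrite !Rabs_mult, (Rabs_pos_eq g2), (Rabs_pos_eq w) by lra.
    assert (g2*Rabs c2 <= G2*Rabs c2) by (apply Rmult_le_compat_r; [apply Rabs_pos|lra]).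
    apply Rmult_le_compat; try lra. apply Rmult_le_pos; [lra|apply Rabs_pos].
  - exists (G1 * Rabs c1 * W). intros t Ht.
    destruct (Hform t Ht) as [g1 [g2 [w [Hg1 [Hg2 [Hw' [E1 E2]]]]]]]. rewrite E1.
    rewrite !Rabs_mult, (Rabs_pos_eq g1), (Rabs_pos_eq w) by lra.
    assert (g1*Rabs c1 <= G1*Rabs c1) by (apply Rmult_le_compat_r; [apply Rabs_pos|lra]).
    apply Rmult_le_compat; try lra. apply Rmult_le_pos; [lra|apply Rabs_pos].
Qed.
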